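(* Let $\mathbb{X}\subseteq\mathbb{P}^2$ be a $\Bbbk$-configuration of type $(1,2,\dots,s)$ with $s\ge2$. Then exactly one of the following holds: (i) There are exactly $s+1$ lines containing $s$ points of $\mathbb{X}$, and $\mathbb{X}$ is precisely the set of pairwise intersection points of these $s+1$ lines. (ii) There are exactly $s$ lines containing $s$ points of $\mathbb{X}$; moreover there exist subsets $\mathbb{X}_1,\dots,\mathbb{X}_s$ and lines $\mathbb{L}_1,\dots,\mathbb{L}_s$ defining $\mathbb{X}$ as a $\Bbbk$-configuration of type $(1,\dots,s)$ such that $\mathbb{L}_1,\dots,\mathbb{L}_s$ are exactly these $s$ lines, and for each $i=1,\dots,s$ the set $\mathbb{X}\cap\mathbb{L}_i$ consists of the $s-1$ points $\mathbb{L}_i\cap\mathbb{L}_j$ ($j\ne i$) together with a single point $P_i$ not lying on any $\mathbb{L}_j$ with $j\neq i$. (iii) There are $r$ lines containing $s$ points of $\mathbb{X}$ with $1\le r<s$; moreover there exist subsets $\mathbb{X}_1,\dots,\mathbb{X}_s$ and lines $\mathbb{L}_1,\dots,\mathbb{L}_s$ defining $\mathbb{X}$ as a $\Bbbk$-configuration of type $(1,\dots,s)$ such that none of these $r$ lines passes through the unique point of $\mathbb{X}_1$.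
   Context: $\Bbbk$ is an algebraically closed field. A $\Bbbk$-configuration of type $(d_1,\dots,d_s)$ is a finite set $\mathbb{X}\subseteq\mathbb{P}^2$ for which there exist integers $1\le d_1<\cdots<d_s$, subsets $\mathbb{X}_1,\dots,\mathbb{X}_s$ of $\mathbb{X}$ and distinct lines $\mathbb{L}_1,\dots,\mathbb{L}_s\subseteq\mathbb{P}^2$ such that (1) $\mathbb{X}=\bigcup_{i=1}^s\mathbb{X}_i$; (2) $|\mathbb{X}_i|=d_i$ and $\mathbb{X}_i\subseteq\mathbb{L}_i$ for each $i$; (3) for $1<i\le s$, $\mathbb{L}_i$ contains no point of $\mathbb{X}_j$ for any $j<i$. We say $\mathbb{X}$ is defined by these subsets and lines; such defining data need not be unique. *)

(* Defs.v *)
From HB Require Import structures.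
From mathcomp Require Import all_boot all_order all_algebra.
Set Implicit Arguments. Unset Strict Implicit. Unset Printing Implicit Defensive.
Import GRing.Theory.
Local Open Scope ring_scope.

(* Homogeneous triples normalized so that the first nonzero coordinate is 1:
   these are canonical representatives of points of P^2 (and, dually, of
   lines of P^2).  Leibniz equality = equality in P^2. *)
Definition pnormal (k : fieldType) (v : k * k * k) : bool :=
  let: (x, y, z) := v in
  (x == 1) || ((x == 0) && (y == 1)) || [&& x == 0, y == 0 & z == 1].

Definition pvec (k : fieldType) := {v : k * k * k | pnormal v}.

Notation ppoint k := (pvec k).
Notation pline k := (pvec k).

Definition on_line (k : fieldType) (P : ppoint k) (L : pline k) : bool :=
  let: (x, y, z) := val P in
  let: (a, b, c) := val L in
  a * x + b * y + c * z == 0.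

(* Finite subsets of P^2 are represented by duplicate-free lists. *)

(* (Xs, Ls) define X as a k-configuration of type (d_1,...,d_s)
   (indices shifted to 0,...,s-1). *)
Definition defines_config (k : fieldType) (s : nat) (d : nat -> nat)
  (X : seq (ppoint k)) (Xs : 'I_s -> seq (ppoint k)) (Ls : 'I_s -> pline k) : Prop :=
  [/\ (forall P, P \in X <-> exists i, P \in Xs i),
      (forall i, uniq (Xs i) /\ size (Xs i) = d i),
      (forall i P, P \in Xs i -> on_line P (Ls i)),
      injective Ls &
      (forall i j : 'I_s, (j < i)%N -> forall P, P \in Xs j -> ~~ on_line P (Ls i))].

Definition config_type (s : nat) (d : nat -> nat) : Prop :=
  (forall i, (i < s)%N -> (1 <= d i)%N) /\
  (forall i, (i.+1 < s)%N -> (d i < d i.+1)%N).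

Definition is_kconfig (k : fieldType) (s : nat) (d : nat -> nat)
  (X : seq (ppoint k)) : Prop :=
  uniq X /\ config_type s d /\ exists Xs Ls, @defines_config k s d X Xs Ls.

Definition npts_on (k : fieldType) (X : seq (ppoint k)) (L : pline k) : nat :=
  count (fun P => on_line P L) X.

Definition lines_with (k : fieldType) (X : seq (ppoint k)) (n : nat)
  (ls : seq (pline k)) : Prop :=
  uniq ls /\ forall L, L \in ls <-> npts_on X L = n.

Definition exactly_one3 (A B C : Prop) : Prop :=
  [\/ A /\ ~ B /\ ~ C, ~ A /\ B /\ ~ C | ~ A /\ ~ B /\ C].

(* type (1,2,...,s) with 0-based indices *)
Definition type1s : nat -> nat := fun i => i.+1.

(* Main.v *)
Require Import Defs.
From HB Require Import structures.
From mathcomp Require Import all_boot all_order all_algebra.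
From mathcomp Require Import zify ring.
From Stdlib Require Import Lia.
Set Implicit Arguments. Unset Strict Implicit. Unset Printing Implicit Defensive.
Import GRing.Theory.

Lemma count_sum (T : Type) (a : pred T) (l : seq T) :
  count a l = \sum_(x <- l) (a x : nat).
Proof. by elim: l => [|x l IH]; rewrite ?big_nil ?big_cons //= IH. Qed.

Lemma sum_eq_le (I : eqType) (l : seq I) (f g : I -> nat) :
  (forall x, x \in l -> g x <= f x) ->
  \sum_(x <- l) f x <= \sum_(x <- l) g x ->
  forall x, x \in l -> f x = g x.
Proof.
elim: l => [|y l IH] H Hs x //.
rewrite !big_cons in Hs.
have Hy := H y (mem_head _ _).
have Hl : forall z, z \in l -> g z <= f z by move=> z Hz; apply: H; rewrite inE Hz orbT.
have Hsl : \sum_(z <- l) g z <= \sum_(z <- l) f z.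
  by rewrite big_seq_cond [X in _ <= X]big_seq_cond; apply: leq_sum => z /andP[Hz _]; apply: Hl.
rewrite inE => /orP[/eqP->|Hx].
  apply/eqP; rewrite eqn_leq Hy andbT; lia.
apply: IH => //; lia.
Qed.

Lemma sum_const_seq (I : eqType) (l : seq I) (c : nat) (f : I -> nat) :
  (forall x, x \in l -> f x = c) -> \sum_(x <- l) f x = size l * c.
Proof.
elim: l => [|y l IH] H; first by rewrite big_nil.
rewrite big_cons H ?mem_head // IH //; last by move=> z Hz; apply: H; rewrite inE Hz orbT.
Qed.

Section Comb.
Variable T : eqType.
Variable on : T -> T -> bool.
Hypothesis uniq2 : forall P Q L M, P != Q -> on P L -> on Q L -> on P M -> on Q M -> L = M.
Variable lt : T -> T -> T.
Hypothesis lt_on : forall P Q, P != Q -> on P (lt P Q) && on Q (lt P Q).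
Variable x0 : T.

Definition npts (X : seq T) L := count (fun P => on P L) X.

Lemma meet_uniq L M P Q : L != M -> on P L -> on P M -> on Q L -> on Q M -> P = Q.
Proof.
move=> HLM HPL HPM HQL HQM; apply/eqP; apply: contraNT HLM => HPQ; apply/eqP.
exact: uniq2 HPQ HPL HQL HPM HQM.
Qed.

Lemma count_le1 (X : seq T) (a : pred T) : uniq X ->
  (forall P Q, P \in X -> Q \in X -> a P -> a Q -> P = Q) -> count a X <= 1.
Proof.
move=> uX H; rewrite -size_filter.
case E: (filter a X) => [|P [|Q l]] //=.
have : P \in filter a X by rewrite E mem_head.
have : Q \in filter a X by rewrite E !inE eqxx orbT.
rewrite !mem_filter => /andP[aQ QX] /andP[aP PX].
have := filter_uniq a uX; rewrite E /= inE (H P Q) ?eqxx //.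
Qed.

Lemma count_ge2 (X : seq T) (a : pred T) : uniq X -> 1 < count a X ->
  exists P Q, [/\ P \in X, Q \in X, a P, a Q & P != Q].
Proof.
move=> uX; rewrite -size_filter.
case E: (filter a X) => [|P [|Q l]] //= _.
have : P \in filter a X by rewrite E mem_head.
have : Q \in filter a X by rewrite E !inE eqxx orbT.
rewrite !mem_filter => /andP[aQ QX] /andP[aP PX].
exists P, Q; split => //.
have := filter_uniq a uX; rewrite E /= inE negb_or => /andP[/andP[]] //.
Qed.

Lemma count_ge1 (X : seq T) (a : pred T) : 0 < count a X -> exists2 P, P \in X & a P.
Proof. by rewrite -has_count => /hasP. Qed.

Definition cfg s (Xs : nat -> seq T) (Ls : nat -> T) :=
 [/\ forall i, i < s -> uniq (Xs i) /\ size (Xs i) = i.+1,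
     forall i P, i < s -> P \in Xs i -> on P (Ls i),
     forall i j, i < s -> j < s -> Ls i = Ls j -> i = j &
     forall i j, j < i -> i < s -> forall P, P \in Xs j -> ~~ on P (Ls i)].

Definition Xof s (Xs : nat -> seq T) := flatten [seq Xs i | i <- iota 0 s].

Lemma XofS s Xs : Xof s.+1 Xs = Xof s Xs ++ Xs s.
Proof. by rewrite /Xof -addn1 iotaD map_cat flatten_cat /= cats0. Qed.

Lemma Xof_ext s Xs Xs' : (forall i, i < s -> Xs i = Xs' i) -> Xof s Xs = Xof s Xs'.
Proof.
move=> H; rewrite /Xof; congr flatten; apply/eq_in_map => i.
by rewrite mem_iota add0n => /H.
Qed.

Lemma mem_XofP s Xs P : reflect (exists2 i, i < s & P \in Xs i) (P \in Xof s Xs).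
Proof.
apply: (iffP idP).
  elim: s => [|s IH]; first by [].
  rewrite XofS mem_cat => /orP[/IH[i Hi HP]|HP]; first by exists i => //; apply: ltnW.
  by exists s.
move=> [i Hi HP]; elim: s Hi => [|s IH] //; rewrite XofS mem_cat ltnS leq_eqVlt.
by case/orP => [/eqP Hi|/IH ->]; [rewrite -Hi HP orbT|].
Qed.

Lemma cfgS s Xs Ls : cfg s.+1 Xs Ls -> cfg s Xs Ls.
Proof.
case=> H1 H2 H3 H4; split.
- by move=> i Hi; apply: H1; apply: ltnW.
- by move=> i P Hi; apply: H2; apply: ltnW.
- by move=> i j Hi Hj; apply: H3; apply: ltnW.
- by move=> i j Hji Hi; apply: H4 => //; apply: ltnW.
Qed.

Lemma Xof_off s Xs Ls P : cfg s.+1 Xs Ls -> P \in Xof s Xs -> ~~ on P (Ls s).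
Proof. by case=> _ _ _ H4 /mem_XofP[i Hi HP]; apply: (H4 s i). Qed.

Lemma uniq_Xof s Xs Ls : cfg s Xs Ls -> uniq (Xof s Xs).
Proof.
elim: s => [|s IH] H //.
rewrite XofS cat_uniq (IH (cfgS H)) //=.
case: H => [H1 H2 H3 H4]; have [-> _] := H1 s (ltnSn s); rewrite andbT.
apply/hasPn => P HP; apply/negP => HP'.
by have := Xof_off (And4 H1 H2 H3 H4) HP'; rewrite (H2 s P (ltnSn s) HP).
Qed.

Lemma size_Xof s Xs Ls : cfg s Xs Ls -> 2 * size (Xof s Xs) = s * s.+1.
Proof.
elim: s => [|s IH] H //.
rewrite XofS size_cat mulnDr (IH (cfgS H)) //.
case: H => [H1 _ _ _]; have [_ ->] := H1 s (ltnSn s); lia.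
Qed.

Lemma nptsS s Xs L : npts (Xof s.+1 Xs) L = npts (Xof s Xs) L + npts (Xs s) L.
Proof. by rewrite /npts XofS count_cat. Qed.

Lemma npts_other s Xs Ls L : cfg s.+1 Xs Ls -> L != Ls s -> npts (Xs s) L <= 1.
Proof.
case=> H1 H2 _ _ HL; apply: count_le1; first by case: (H1 s (ltnSn s)).
move=> P Q HP HQ HPL HQL; apply: (meet_uniq HL) => //; exact: H2.
Qed.

Lemma npts_off s Xs Ls : cfg s.+1 Xs Ls -> npts (Xof s Xs) (Ls s) = 0.
Proof.
move=> H; apply/eqP; rewrite -leqn0 leqNgt -has_count; apply/hasP => [[P HP]].
by apply/negP; apply: Xof_off H HP.
Qed.

Lemma npts_Ls s Xs Ls : cfg s.+1 Xs Ls -> npts (Xof s.+1 Xs) (Ls s) = s.+1.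
Proof.
move=> H; rewrite nptsS npts_off // add0n.
case: H => [H1 H2 _ _]; have [_ <-] := H1 s (ltnSn s).
rewrite /npts; apply/eqP; rewrite -all_count; apply/allP => P HP; exact: H2.
Qed.

Lemma npts_le s Xs Ls L : cfg s Xs Ls -> npts (Xof s Xs) L <= s.
Proof.
elim: s => [|s IH] H; first by [].
rewrite nptsS; case: (eqVneq L (Ls s)) => [->|HL].
  by rewrite -nptsS (npts_Ls H).
have := IH (cfgS H); have := npts_other H HL; lia.
Qed.


Definition cand (X : seq T) := [seq lt P Q | P <- X, Q <- X].
Definition flines s (X : seq T) := undup [seq L <- cand X | npts X L == s].

Lemma flines_uniq s X : uniq (flines s X).
Proof. exact: undup_uniq. Qed.

Lemma flinesP s X L : uniq X -> 1 < s -> (L \in flines s X) = (npts X L == s).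
Proof.
move=> uX Hs; rewrite mem_undup mem_filter; apply/andP/idP => [[]//|HL]; split=> //.
have := @count_ge2 X (fun P => on P L) uX; rewrite -/(npts X L) (eqP HL) => /(_ Hs).
move=> [P [Q [HP HQ HPL HQL HPQ]]].
have /andP[H1 H2] := lt_on HPQ.
have -> : L = lt P Q by apply: (uniq2 HPQ).
by apply/allpairsP; exists (P, Q).
Qed.

Lemma npts_perm X X' L : perm_eq X X' -> npts X L = npts X' L.
Proof. by move/permP => H; apply: H. Qed.

Lemma flines_perm s X X' : uniq X -> 1 < s -> perm_eq X X' -> flines s X =i flines s X'.
Proof.
move=> uX Hs HX L; rewrite !flinesP ?(npts_perm L HX) //.
by rewrite -(perm_uniq HX).
Qed.

Lemma lw_size s X ls : uniq X -> 1 < s -> uniq ls ->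
  (forall L, L \in ls <-> npts X L = s) -> size ls = size (flines s X).
Proof.
move=> uX Hs uls H; apply: perm_size; apply: uniq_perm => //; first exact: flines_uniq.
move=> L; rewrite flinesP //; apply/idP/eqP => /H //.
Qed.

Lemma base2 Xs Ls : cfg 2 Xs Ls -> exists A B C,
  [/\ Xof 2 Xs = [:: A; B; C], Xs 0 = [:: A], Xs 1 = [:: B; C], B != C &
      [/\ ~~ on A (Ls 1), on B (Ls 1) & on C (Ls 1)]].
Proof.
case=> H1 H2 H3 H4.
have [_] := H1 0 isT; case E0: (Xs 0) => [|A [|]] // _.
have [u1] := H1 1 isT; case E1: (Xs 1) => [|B [|C [|]]] // _.
exists A, B, C; split => //; first by rewrite /Xof /= E0 E1.
  by move: u1; rewrite E1 /= inE andbT.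
split.
- by apply: (H4 1 0) => //; rewrite E0 mem_head.
- by apply: H2 => //; rewrite E1 mem_head.
- by apply: H2 => //; rewrite E1 !inE eqxx orbT.
Qed.

Lemma bound2 Xs Ls : cfg 2 Xs Ls -> size (flines 2 (Xof 2 Xs)) <= 3.
Proof.
move=> H; have uX := uniq_Xof H.
have [A [B [C [EX E0 E1 HBC [HA HB HC]]]]] := base2 H.
have HAB : A != B by apply: contraNneq HA => ->.
have HAC : A != C by apply: contraNneq HA => ->.
have -> : 3 = size [:: Ls 1; lt A B; lt A C] by [].
apply: uniq_leq_size; first exact: flines_uniq.
move=> L; rewrite flinesP // EX /npts /=.
case hA: (on A L); case hB: (on B L); case hC: (on C L) => //= _.
- have /andP[h1 h2] := lt_on HAB.
  by rewrite (uniq2 HAB hA hB h1 h2) !inE eqxx orbT.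
- have /andP[h1 h2] := lt_on HAC.
  by rewrite (uniq2 HAC hA hC h1 h2) !inE eqxx !orbT.
- by rewrite (uniq2 HBC hB hC HB HC) !inE eqxx.
Qed.

Lemma flines_sub s Xs Ls L : 1 < s -> cfg s.+1 Xs Ls ->
  L \in flines s.+1 (Xof s.+1 Xs) -> L != Ls s ->
  L \in flines s (Xof s Xs) /\ npts (Xs s) L = 1.
Proof.
move=> Hs H; rewrite flinesP ?(uniq_Xof H) //; last by apply: ltnW.
rewrite nptsS => /eqP E HL.
have h1 := npts_le L (cfgS H); have h2 := npts_other H HL.
rewrite flinesP ?(uniq_Xof (cfgS H)) //; split; lia.
Qed.

Lemma bound s Xs Ls : 1 < s -> cfg s Xs Ls -> size (flines s (Xof s Xs)) <= s.+1.
Proof.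
elim: s Xs Ls => [|s IH] Xs Ls // Hs H.
case: (eqVneq s 1) => [E|Hs1]; first by subst s; exact: bound2 H.
have Hs' : 1 < s by lia.
apply: (@leq_trans (size (Ls s :: flines s (Xof s Xs)))); last first.
  by rewrite /= ltnS; apply: IH Hs' (cfgS H).
apply: uniq_leq_size; first exact: flines_uniq.
move=> L HL; rewrite inE; case: (eqVneq L (Ls s)) => //= HL'.
by case: (flines_sub Hs' H HL HL').
Qed.


Lemma sum_mull (I : Type) (l : seq I) (f : I -> nat) c :
  \sum_(x <- l) f x * c = (\sum_(x <- l) f x) * c.
Proof. by elim: l => [|y l IH]; rewrite ?big_nil ?big_cons // IH mulnDl. Qed.

Lemma cnt_neq (l : seq T) (a : pred T) x : uniq l -> x \in l -> a x ->
  count (fun y => (x != y) && a y) l = (count a l).-1.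
Proof.
move=> ul xl ax.
have E : count (fun y => (x != y) && a y) l = count (predC1 x) (filter a l).
  by rewrite count_filter; apply: eq_count => y /=; rewrite eq_sym.
have := count_predC (pred1 x) (filter a l).
rewrite count_uniq_mem ?filter_uniq // mem_filter ax xl size_filter E /=.
move=> <-; by rewrite add1n.
Qed.

Section Count.
Variables (Y ms : seq T) (s : nat).
Hypotheses (uY : uniq Y) (ums : uniq ms) (hf : forall L, L \in ms -> npts Y L = s).

Definition mm P := count (on P) ms.

Lemma C1 : \sum_(P <- Y) mm P = size ms * s.
Proof.
rewrite /mm; under eq_bigr => P _ do rewrite count_sum.
rewrite exchange_big /=; apply: sum_const_seq => L HL.
by rewrite -(hf HL) /npts count_sum.
Qed.

Lemma mm2 P : mm P * (mm P).-1 =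
  \sum_(L <- ms) \sum_(L' <- ms) ((L != L') && on P L && on P L' : nat).
Proof.
transitivity (\sum_(L <- ms) (on P L : nat) * (mm P).-1).
  by rewrite sum_mull /mm count_sum.
rewrite big_seq_cond [RHS]big_seq_cond; apply: eq_bigr => L /andP[HL _].
rewrite -count_sum; case hP: (on P L) => /=.
  rewrite mul1n -(cnt_neq (a:=on P) ums HL hP); apply: eq_count => L' /=.
  by rewrite andbT.
by rewrite mul0n; apply/eqP; rewrite eq_sym -leqn0 leqNgt -has_count; apply/hasP => [[L' _]]; rewrite !andbF.
Qed.

Definition cc L L' := \sum_(P <- Y) ((L != L') && on P L && on P L' : nat).

Lemma cc_le L L' : cc L L' <= (L != L').
Proof.
rewrite /cc -count_sum; case: (eqVneq L L') => [_|HL] /=.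
  by rewrite leqn0; apply/eqP; apply/eqP; rewrite -leqn0 leqNgt -has_count; apply/hasP => [[P _]].
apply: count_le1 => // P Q _ _ /andP[h1 h2] /andP[h3 h4]; exact: meet_uniq HL h1 h2 h3 h4.
Qed.

Lemma C2 : \sum_(P <- Y) mm P * (mm P).-1 = \sum_(L <- ms) \sum_(L' <- ms) cc L L'.
Proof.
under eq_bigr => P _ do rewrite mm2.
rewrite exchange_big /=; apply: eq_bigr => L _.
by rewrite exchange_big.
Qed.

Lemma pairs_count : \sum_(L <- ms) \sum_(L' <- ms) ((L != L') : nat) = size ms * (size ms).-1.
Proof.
apply: sum_const_seq => L HL; rewrite -count_sum.
rewrite -count_predT -(cnt_neq (a:=predT) ums HL) //; apply: eq_count => y /=; by rewrite andbT.
Qed.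

Lemma C3 : 2 * size Y = s * s.+1 -> size ms = s \/ size ms = s.+1 ->
  (forall P, P \in Y -> mm P = 1 \/ mm P = 2) /\
  (forall L L', L \in ms -> L' \in ms -> L != L' -> exists2 P, P \in Y & on P L && on P L').
Proof.
move=> hN hr.
set r := size ms in hr.
have hS2 : \sum_(P <- Y) mm P * (mm P).-1 <= r * r.-1.
  rewrite C2 -pairs_count; apply: leq_sum => L _; apply: leq_sum => L' _; exact: cc_le.
have hfg : forall P, P \in Y -> 2 * mm P <= mm P * (mm P).-1 + 2.
  by move=> P _; case: (mm P) => [|n] //=; nia.
have hsum : \sum_(P <- Y) (mm P * (mm P).-1 + 2) <= \sum_(P <- Y) 2 * mm P.
  rewrite big_split /= (sum_const_seq (c:=2) (l:=Y) (f:=fun _ => 2)) //.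
  rewrite -big_distrr /= C1 -/r.
  move: hS2 hN; case: hr => ->; case: (s) => [|s'] /=; nia.
have heq := sum_eq_le hfg hsum.
split.
  move=> P HP; have := heq P HP; case: (mm P) => [|[|[|n]]] /= E; [lia|by left|by right|nia].
have hS2' : \sum_(P <- Y) mm P * (mm P).-1 = r * r.-1.
  have : \sum_(P <- Y) (mm P * (mm P).-1 + 2) = \sum_(P <- Y) 2 * mm P.
    by rewrite big_seq [RHS]big_seq; apply: eq_bigr => P HP; rewrite heq.
  rewrite big_split /= (sum_const_seq (c:=2) (l:=Y) (f:=fun _ => 2)) //.
  rewrite -big_distrr /= C1 -/r.
  move: hN; case: hr => ->; case: (s) => [|s'] /=; nia.
have hle1 : forall L, L \in ms -> \sum_(L' <- ms) cc L L' <= \sum_(L' <- ms) ((L != L') : nat).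
  by move=> L _; apply: leq_sum => L' _; apply: cc_le.
have hsum1 : \sum_(L <- ms) \sum_(L' <- ms) ((L != L') : nat) <= \sum_(L <- ms) \sum_(L' <- ms) cc L L'.
  by rewrite -C2 hS2' pairs_count.
have heq1 := sum_eq_le hle1 hsum1.
move=> L L' HL HL' HLL'.
have hle2 : forall L', L' \in ms -> cc L L' <= ((L != L') : nat) by move=> *; apply: cc_le.
have heq2 := sum_eq_le hle2 (eq_leq (heq1 L HL)) HL'.
have : 0 < cc L L' by rewrite -heq2 HLL'.
rewrite /cc -count_sum => /count_ge1 [P HP /andP[/andP[_ h1] h2]]; by exists P => //; rewrite h1 h2.
Qed.

Lemma C3full : 2 * size Y = s * s.+1 -> size ms = s.+1 -> forall P, P \in Y -> mm P = 2.
Proof.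
move=> hN hr.
have [H12 _] := C3 hN (or_intror hr).
have hle : forall P, P \in Y -> mm P <= 2 by move=> P /H12 [] ->.
have hsum : \sum_(P <- Y) 2 <= \sum_(P <- Y) mm P.
  rewrite C1 hr (sum_const_seq (c:=2) (l:=Y) (f:=fun _ => 2)) //; lia.
by move=> P HP; rewrite (@sum_eq_le _ Y (fun _ => 2) (fun P => mm P) hle hsum P HP).
Qed.

End Count.

Lemma head_filter (a : pred T) l : has a l -> head x0 (filter a l) \in l /\ a (head x0 (filter a l)).
Proof.
rewrite has_filter; case E: (filter a l) => [|h t] //= _.
have : h \in filter a l by rewrite E mem_head.
by rewrite mem_filter => /andP[].
Qed.

Section Cons.
Variables (Y ms : seq T) (s : nat).
Hypotheses (uY : uniq Y) (ums : uniq ms) (hf : forall L, L \in ms -> npts Y L = s).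
Hypothesis hN : 2 * size Y = s * s.+1.
Hypothesis hr : size ms = s \/ size ms = s.+1.

Let n := size ms.
Definition M i := nth x0 ms i.
Definition Q i j := head x0 [seq P <- Y | on P (M i) && on P (M j)].
Let H12 := (C3 uY ums hf hN hr).1.
Let meet := (C3 uY ums hf hN hr).2.

Lemma M_in i : i < n -> M i \in ms.
Proof. exact: mem_nth. Qed.

Lemma M_inj i j : i < n -> j < n -> M i = M j -> i = j.
Proof. by move=> hi hj /eqP; rewrite /M nth_uniq // => /eqP. Qed.

Lemma M_neq i j : i < n -> j < n -> i != j -> M i != M j.
Proof. by move=> hi hj; apply: contraNneq => /(M_inj hi hj) ->. Qed.

Lemma Q_spec i j : i < n -> j < n -> i != j ->
  [/\ Q i j \in Y, on (Q i j) (M i) & on (Q i j) (M j)].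
Proof.
move=> hi hj hij.
have [P HP HPM] := meet (M_in hi) (M_in hj) (M_neq hi hj hij).
have [] := @head_filter (fun P => on P (M i) && on P (M j)) Y (introT hasP (ex_intro2 _ _ P HP HPM)).
by move=> h1 /andP[h2 h3]; split.
Qed.

Lemma Q_uniq P i j : i < n -> j < n -> i != j -> on P (M i) -> on P (M j) -> P = Q i j.
Proof.
move=> hi hj hij h1 h2; have [_ h3 h4] := Q_spec hi hj hij.
exact: meet_uniq (M_neq hi hj hij) h1 h2 h3 h4.
Qed.

Lemma mm_ge P (l : seq T) : uniq l -> {subset l <= ms} -> all (on P) l -> size l <= mm ms P.
Proof.
move=> ul sub al; rewrite /mm -size_filter; apply: uniq_leq_size => // L HL.
by rewrite mem_filter (allP al L HL) sub.
Qed.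

Lemma only2 P a b c : P \in Y -> a < n -> b < n -> c < n -> a != b ->
  on P (M a) -> on P (M b) -> on P (M c) -> c = a \/ c = b.
Proof.
move=> HP ha hb hc hab h1 h2 h3.
case: (eqVneq c a) => [|hca]; first by left.
case: (eqVneq c b) => [|hcb]; first by right.
have hu : uniq [:: M a; M b; M c].
  rewrite /= !inE !negb_or (M_neq ha hb hab) (M_neq ha hc (ltac:(by rewrite eq_sym))).
  by rewrite (M_neq hb hc (ltac:(by rewrite eq_sym))).
have hsub : {subset [:: M a; M b; M c] <= ms}.
  by move=> L; rewrite !inE => /or3P[] /eqP ->; exact: M_in.
have := @mm_ge P _ hu hsub; rewrite /= h1 h2 h3 /= => /(_ isT).
by case: (H12 HP) => ->.
Qed.

Lemma mm_two P a b : a < n -> b < n -> a != b -> on P (M a) -> on P (M b) -> 2 <= mm ms P.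
Proof.
move=> ha hb hab h1 h2.
have := @mm_ge P [:: M a; M b]; rewrite /= inE M_neq // h1 h2 /=; apply => //.
by move=> L; rewrite !inE => /orP[] /eqP ->; exact: M_in.
Qed.

Lemma one_line P a c : mm ms P = 1 -> a < n -> c < n -> on P (M a) -> on P (M c) -> c = a.
Proof.
move=> h1 ha hc h2 h3; apply/eqP; apply: contraT => hca.
by have := mm_two hc ha hca h3 h2; rewrite h1.
Qed.

Lemma ex_line P : P \in Y -> exists2 a, a < n & on P (M a).
Proof.
move=> HP; have : 0 < mm ms P by case: (H12 HP) => ->.
rewrite /mm -has_count => /hasP[L HL HPL].
by exists (index L ms); rewrite ?index_mem // /M nth_index.
Qed.

Lemma two_lines P : P \in Y -> mm ms P = 2 -> exists a b,
  [/\ a < n, b < n, a != b, on P (M a) & on P (M b)].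
Proof.
move=> HP h2; have := @count_ge2 ms (on P) ums; rewrite -/(mm ms P) h2 => /(_ isT).
move=> [L1 [L2 [h1 h2' h3 h4 h5]]].
exists (index L1 ms), (index L2 ms); rewrite !index_mem /M !nth_index //; split => //.
by apply: contra h5 => /eqP /(congr1 (nth x0 ms)); rewrite !nth_index // => ->.
Qed.

Section Con2.
Hypothesis hs : size ms = s.

Definition Pp i := head x0 [seq P <- Y | on P (M i) && (mm ms P == 1)].

Lemma cnt_not1 i : i < s -> count (fun P => on P (M i) && (mm ms P != 1)) Y = s.-1.
Proof.
move=> hi; have hin : i < n by rewrite /n hs.
set Ql := [seq Q i j | j <- [seq j <- iota 0 s | j != i]].
have sQl : size Ql = s.-1.
  rewrite size_map size_filter.
  have := count_predC (pred1 i) (iota 0 s); rewrite size_iota count_uniq_mem ?iota_uniq //.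
  by rewrite mem_iota add0n hi add1n => h; rewrite -[in RHS]h.
have uQl : uniq Ql.
  rewrite map_inj_in_uniq ?filter_uniq ?iota_uniq // => j j'.
  rewrite !mem_filter !mem_iota /= !add0n => /andP[hj1 hj2] /andP[hj1' hj2'] E.
  have hjn : j < n by rewrite /n hs. have hjn' : j' < n by rewrite /n hs.
  have [Y1 o1 o2] := Q_spec hin hjn (ltac:(by rewrite eq_sym)).
  have [_ _ o3] := Q_spec hin hjn' (ltac:(by rewrite eq_sym)).
  rewrite -E in o3.
  case: (only2 Y1 hin hjn hjn' (ltac:(by rewrite eq_sym)) o1 o2 o3) => // hh.
  by rewrite hh eqxx in hj1'.
apply/eqP; rewrite eqn_leq; apply/andP; split.
  rewrite -sQl -size_filter; apply: uniq_leq_size; first exact: filter_uniq.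
  move=> P; rewrite mem_filter => /andP[/andP[hPi hm] HP].
  have hm2 : mm ms P = 2 by case: (H12 HP) hm => ->.
  have [a [b [ha hb hab h1 h2]]] := two_lines HP hm2.
  have [ia|ib] := only2 HP ha hb hin hab h1 h2 hPi.
    apply/mapP; exists b; first by rewrite mem_filter mem_iota add0n ia eq_sym hab -hs hb.
    by apply: (Q_uniq hin hb _ hPi h2); rewrite ia.
  apply/mapP; exists a; first by rewrite mem_filter mem_iota add0n ib hab -hs ha.
  by apply: (Q_uniq hin ha _ hPi h1); rewrite ib eq_sym.
rewrite -sQl -size_filter; apply: uniq_leq_size => // P /mapP[j].
rewrite mem_filter mem_iota add0n => /andP[hji hj] ->.
have hjn : j < n by rewrite /n hs.
have [Y1 o1 o2] := Q_spec hin hjn (ltac:(by rewrite eq_sym)).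
rewrite mem_filter o1 Y1 andbT /=.
by have := mm_two hin hjn (ltac:(by rewrite eq_sym)) o1 o2; case: (mm ms (Q i j)) => [|[|]].
Qed.

Lemma cnt1 i : i < s -> count (fun P => on P (M i) && (mm ms P == 1)) Y = 1.
Proof.
move=> hi; have hin : i < n by rewrite /n hs.
have := count_predC (fun P => mm ms P == 1) (filter (fun P => on P (M i)) Y).
rewrite !count_filter size_filter -/(npts Y (M i)) hf ?M_in //.
have E : count (predI (predC (fun P => mm ms P == 1)) (fun P => on P (M i))) Y = s.-1.
  by rewrite -(cnt_not1 hi); apply: eq_count => P /=; rewrite andbC.
rewrite E.
have E2 : count (predI (fun P => mm ms P == 1) (fun P => on P (M i))) Y =
          count (fun P => on P (M i) && (mm ms P == 1)) Y.
  by apply: eq_count => P /=; rewrite andbC.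
rewrite E2; move: hi; case: (s) => // s' _ /=; lia.
Qed.

Lemma Pp_spec i : i < s -> [/\ Pp i \in Y, on (Pp i) (M i) & mm ms (Pp i) = 1].
Proof.
move=> hi; have := cnt1 hi => h.
have hh : has (fun P => on P (M i) && (mm ms P == 1)) Y by rewrite has_count h.
have [h1 /andP[h2 /eqP h3]] := head_filter hh; by split.
Qed.

Lemma Pp_uniq i P : i < s -> P \in Y -> on P (M i) -> mm ms P = 1 -> P = Pp i.
Proof.
move=> hi HP h1 h2; have := cnt1 hi; rewrite -size_filter /Pp.
case E: (filter _ Y) => [|h [|]] // _.
have : P \in filter (fun P => on P (M i) && (mm ms P == 1)) Y by rewrite mem_filter h1 h2 eqxx HP.
by rewrite E inE => /eqP.
Qed.

Definition Xs2 i := Pp i :: [seq Q i j | j <- iota 0 i].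

Lemma hsn i : i < s -> i < n. Proof. by rewrite /n hs. Qed.

Lemma mem_Xs2 i P : i < s -> P \in Xs2 i ->
  P = Pp i \/ exists2 j, j < i & P = Q i j.
Proof.
move=> hi; rewrite inE => /orP[/eqP ->|/mapP[j]]; first by left.
by rewrite mem_iota add0n => /andP[_ hj] ->; right; exists j.
Qed.

Lemma cfg2 : cfg s Xs2 M.
Proof.
split.
- move=> i hi; split; last by rewrite /= size_map size_iota.
  rewrite /= map_inj_in_uniq ?iota_uniq.
    rewrite andbT; apply/mapP => [[j]]; rewrite mem_iota add0n => /andP[_ hj] E.
    have hjs : j < s by apply: ltn_trans hj hi.
    have hij : i != j by rewrite neq_ltn hj orbT.
    have [_ o1 o2] := Q_spec (hsn hi) (hsn hjs) hij.
    have [_ _ m1] := Pp_spec hi.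
    by have := mm_two (hsn hi) (hsn hjs) hij o1 o2; rewrite -E m1.
  move=> j j'; rewrite !mem_iota !add0n => /andP[_ hj] /andP[_ hj'] E.
  have hjs : j < s by apply: ltn_trans hj hi.
  have hjs' : j' < s by apply: ltn_trans hj' hi.
  have hij : i != j by rewrite neq_ltn hj orbT.
  have hij' : i != j' by rewrite neq_ltn hj' orbT.
  have [Y1 o1 o2] := Q_spec (hsn hi) (hsn hjs) hij.
  have [_ _ o3] := Q_spec (hsn hi) (hsn hjs') hij'.
  rewrite -E in o3.
  case: (only2 Y1 (hsn hi) (hsn hjs) (hsn hjs') hij o1 o2 o3) => // hh.
  by rewrite hh eqxx in hij'.
- move=> i P hi /(mem_Xs2 hi) [->|[j hj ->]]; first by case: (Pp_spec hi).
  have hjs : j < s by apply: ltn_trans hj hi.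
  by case: (Q_spec (hsn hi) (hsn hjs) (ltac:(by rewrite neq_ltn hj orbT))).
- by move=> i j hi hj; apply: M_inj; apply: hsn.
- move=> i j hji hi P /(mem_Xs2 (ltn_trans hji hi)) [->|[l hl ->]].
    have [_ o1 m1] := Pp_spec (ltn_trans hji hi).
    apply/negP => o2; have := one_line m1 (hsn (ltn_trans hji hi)) (hsn hi) o1 o2.
    by move=> E; rewrite E ltnn in hji.
  have hjs := ltn_trans hji hi; have hls := ltn_trans hl hjs.
  have hjl : j != l by rewrite neq_ltn hl orbT.
  have [Y1 o1 o2] := Q_spec (hsn hjs) (hsn hls) hjl.
  apply/negP => o3.
  case: (only2 Y1 (hsn hjs) (hsn hls) (hsn hi) hjl o1 o2 o3) => E; subst i.
    by rewrite ltnn in hji.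
  by have := ltn_trans hl hji; rewrite ltnn.
Qed.

Lemma mem2 P : P \in Y <-> exists2 i, i < s & P \in Xs2 i.
Proof.
split => [HP|[i hi /(mem_Xs2 hi) [->|[j hj ->]]]].
- case: (H12 HP) => hm.
    have [a ha h1] := ex_line HP.
    have has : a < s by rewrite -hs.
    by exists a => //; rewrite (Pp_uniq has HP h1 hm) mem_head.
  have [a [b [ha hb hab h1 h2]]] := two_lines HP hm.
  have has : a < s by rewrite -hs.
  have hbs : b < s by rewrite -hs.
  case: (ltngtP a b) => [hlt|hlt|E]; last by rewrite E eqxx in hab.
    exists b => //; rewrite inE; apply/orP; right; apply/mapP; exists a; first by rewrite mem_iota leq0n add0n.
    by apply: Q_uniq => //; rewrite eq_sym.
  exists a => //; rewrite inE; apply/orP; right; apply/mapP; exists b; first by rewrite mem_iota leq0n add0n.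
  exact: Q_uniq.
- by case: (Pp_spec hi).
- have hjs : j < s by apply: ltn_trans hj hi.
  by case: (Q_spec (hsn hi) (hsn hjs) (ltac:(by rewrite neq_ltn hj orbT))).
Qed.

End Con2.
Section Con1.
Hypothesis hs1 : size ms = s.+1.

Definition Xs1 i := [seq Q i.+1 j | j <- iota 0 i.+1].
Definition Ls1 i := M i.+1.

Lemma hsn1 i : i < s.+1 -> i < n. Proof. by rewrite /n hs1. Qed.

Lemma all2 P : P \in Y -> mm ms P = 2.
Proof. exact: (C3full uY ums hf hN hs1). Qed.

Lemma mem_Xs1 i P : P \in Xs1 i -> exists2 j, j <= i & P = Q i.+1 j.
Proof. by move=> /mapP[j]; rewrite mem_iota add0n ltnS => /andP[_ hj] ->; exists j. Qed.

Lemma cfg1 : cfg s Xs1 Ls1.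
Proof.
split.
- move=> i hi; split; last by rewrite /= size_map size_iota.
  rewrite map_inj_in_uniq ?iota_uniq //.
  move=> j j'; rewrite !mem_iota !add0n !ltnS => /andP[_ hj] /andP[_ hj'] E.
  have hi1 : i.+1 < s.+1 by [].
  have hjs : j < s.+1 by apply: leq_ltn_trans hj _; apply: ltnW.
  have hjs' : j' < s.+1 by apply: leq_ltn_trans hj' _; apply: ltnW.
  have hij : i.+1 != j by rewrite neq_ltn ltnS hj orbT.
  have hij' : i.+1 != j' by rewrite neq_ltn ltnS hj' orbT.
  have [Y1 o1 o2] := Q_spec (hsn1 hi1) (hsn1 hjs) hij.
  have [_ _ o3] := Q_spec (hsn1 hi1) (hsn1 hjs') hij'.
  rewrite -E in o3.
  case: (only2 Y1 (hsn1 hi1) (hsn1 hjs) (hsn1 hjs') hij o1 o2 o3) => // hh.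
  by rewrite hh eqxx in hij'.
- move=> i P hi /mem_Xs1 [j hj ->].
  have hi1 : i.+1 < s.+1 by [].
  have hjs : j < s.+1 by apply: leq_ltn_trans hj _; apply: ltnW.
  by case: (Q_spec (hsn1 hi1) (hsn1 hjs) (ltac:(by rewrite neq_ltn ltnS hj orbT))).
- by move=> i j hi hj /(M_inj (hsn1 (hi : i.+1 < s.+1)) (hsn1 (hj : j.+1 < s.+1))) [].
- move=> i j hji hi P /mem_Xs1 [l hl ->].
  have hi1 : i.+1 < s.+1 by [].
  have hj1 : j.+1 < s.+1 by apply: ltn_trans hji _.
  have hls : l < s.+1 by apply: leq_ltn_trans hl _; apply: ltnW.
  have hjl : j.+1 != l by rewrite neq_ltn ltnS hl orbT.
  have [Y1 o1 o2] := Q_spec (hsn1 hj1) (hsn1 hls) hjl.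
  apply/negP => o3.
  case: (only2 Y1 (hsn1 hj1) (hsn1 hls) (hsn1 hi1) hjl o1 o2 o3) => [[E]|E].
    by rewrite E ltnn in hji.
  by move: hl hji; rewrite -E; lia.
Qed.

Lemma mem1 P : P \in Y <-> exists2 i, i < s & P \in Xs1 i.
Proof.
split => [HP|[i hi /mem_Xs1 [j hj ->]]].
- have [a [b [ha hb hab h1 h2]]] := two_lines HP (all2 HP).
  case: (ltngtP a b) => [hlt|hlt|E]; last by rewrite E eqxx in hab.
    exists b.-1; first by move: hb; rewrite /n hs1; lia.
    apply/mapP; exists a; first by rewrite mem_iota add0n; move: hlt; lia.
    rewrite prednK; last by move: hlt; lia.
    by apply: Q_uniq => //; rewrite eq_sym.
  exists a.-1; first by move: ha; rewrite /n hs1; lia.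
  apply/mapP; exists b; first by rewrite mem_iota add0n; move: hlt; lia.
  rewrite prednK; last by move: hlt; lia.
  exact: Q_uniq.
- have hi1 : i.+1 < s.+1 by [].
  have hjs : j < s.+1 by apply: leq_ltn_trans hj _; apply: ltnW.
  by case: (Q_spec (hsn1 hi1) (hsn1 hjs) (ltac:(by rewrite neq_ltn ltnS hj orbT))).
Qed.

Lemma Xs1_0 : Xs1 0 = [:: Q 1 0]. Proof. by []. Qed.

Lemma Q10_lines L : 0 < s -> L \in ms -> on (Q 1 0) L -> L = M 0 \/ L = M 1.
Proof.
move=> hs0 HL hQ.
have h1 : 1 < n by rewrite /n hs1.
have h0 : 0 < n by rewrite /n hs1.
have [Y1 o1 o2] := Q_spec h1 h0 isT.
have hLi : index L ms < n by rewrite index_mem.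
have hQ' : on (Q 1 0) (M (index L ms)) by rewrite /M nth_index.
case: (only2 Y1 h1 h0 hLi isT o1 o2 hQ') => E.
  by right; rewrite -E /M nth_index.
by left; rewrite -E /M nth_index.
Qed.

End Con1.

End Cons.

Lemma mem_rem2 (l : seq T) a b L : uniq l -> L \in l -> L \in a :: b :: rem b (rem a l).
Proof.
move=> ul hL; rewrite !in_cons; case: (eqVneq L a) => //= hLa; case: (eqVneq L b) => //= hLb.
by rewrite (mem_rem_uniq _ (rem_uniq _ ul)) inE hLb /= (mem_rem_uniq _ ul) inE hLa.
Qed.

Lemma mem_rem1 (l : seq T) a L : uniq l -> L \in l -> L \in a :: rem a l.
Proof.
move=> ul hL; rewrite !in_cons; case: (eqVneq L a) => //= hLa.
by rewrite (mem_rem_uniq _ ul) inE hLa.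
Qed.

Definition extXs s (Xs' Xs : nat -> seq T) i := if i < s then Xs' i else Xs i.
Definition extLs s (Ls' Ls : nat -> T) i := if i < s then Ls' i else Ls i.

Lemma extend s Xs Ls Xs' Ls' : cfg s.+1 Xs Ls -> cfg s Xs' Ls' ->
  Xof s Xs' =i Xof s Xs ->
  cfg s.+1 (extXs s Xs' Xs) (extLs s Ls' Ls) /\
  Xof s.+1 (extXs s Xs' Xs) =i Xof s.+1 Xs.
Proof.
move=> H H' HX.
have off : forall i P, i < s -> P \in Xs' i -> ~~ on P (Ls s).
  move=> i P hi HP; apply: (Xof_off H); rewrite -HX; apply/mem_XofP; by exists i.
case: H => [H1 H2 H3 H4]; case: H' => [H1' H2' H3' H4'].
split; last first.
  move=> P; rewrite !XofS !mem_cat /extXs ltnn (@Xof_ext s _ Xs'); first by rewrite HX.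
  by move=> i ->.
have eqs : forall i, i < s.+1 -> ~~ (i < s) -> i = s.
  by move=> i; rewrite ltnS -leqNgt => h1 h2; apply/eqP; rewrite eqn_leq h1 h2.
split; rewrite /extXs /extLs.
- move=> i hi; case: ifP => [his|/negbT his]; first exact: H1'.
  by rewrite (eqs i hi his); apply: H1.
- move=> i P hi; case: ifP => [his|/negbT his]; first exact: H2'.
  by rewrite (eqs i hi his); apply: H2.
- move=> i j hi hj; case: ifP => [his|/negbT his]; case: ifP => [hjs|/negbT hjs].
  + exact: H3'.
  + rewrite (eqs j hj hjs) => E; have [_ sz] := H1' i his.
    case E': (Xs' i) sz => [|P l] // _.
    have : on P (Ls' i) by apply: H2' => //; rewrite E' mem_head.
    by rewrite E (negbTE (off i P his _)) // E' mem_head.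
  + rewrite (eqs i hi his) => E; have [_ sz] := H1' j hjs.
    case E': (Xs' j) sz => [|P l] // _.
    have : on P (Ls' j) by apply: H2' => //; rewrite E' mem_head.
    by rewrite -E (negbTE (off j P hjs _)) // E' mem_head.
  + by rewrite (eqs i hi his) (eqs j hj hjs).
- move=> i j hji hi; case: (boolP (i < s)) => his.
    by rewrite (ltn_trans hji his) => P; apply: H4'.
  have hjs : j < s by rewrite -(eqs i hi his).
  by rewrite hjs (eqs i hi his) => P; apply: off.
Qed.

Lemma mem_flines_cnt s Xs Ls : 1 < s -> cfg s.+1 Xs Ls ->
  count (fun L => L \in flines s.+1 (Xof s.+1 Xs)) (flines s (Xof s Xs)) <=
  (size (flines s.+1 (Xof s.+1 Xs))).-1.
Proof.
move=> hs H; set ls := flines s.+1 _; set ls' := flines s _.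
have hLs : Ls s \in ls by rewrite flinesP ?(uniq_Xof H) ?(npts_Ls H) //; apply: ltnW.
rewrite -size_filter -(size_rem hLs); apply: uniq_leq_size; first by apply: filter_uniq; exact: flines_uniq.
move=> L; rewrite mem_filter mem_rem_uniq ?flines_uniq // => /andP[hL hL']; rewrite inE hL andbT.
apply: contraTneq hL' => ->; rewrite flinesP ?(uniq_Xof (cfgS H)) ?(npts_off H) //; lia.
Qed.

Lemma iii s : 1 < s -> forall Xs Ls, cfg s Xs Ls -> size (flines s (Xof s Xs)) < s ->
  exists Xs' Ls', [/\ cfg s Xs' Ls', Xof s Xs' =i Xof s Xs &
    forall P, P \in Xs' 0 -> forall L, L \in flines s (Xof s Xs) -> ~~ on P L].
Proof.
elim: s => [|s IH] // hs Xs Ls H hsz.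
case: (eqVneq s 1) => [E|hs1].
  subst s; exfalso; move: hsz; apply/negP; rewrite -leqNgt.
  have uX := uniq_Xof H.
  have [A [B [C [EX E0 E1 HBC [HA HB HC]]]]] := base2 H.
  have HAB : A != B by apply: contraNneq HA => ->.
  have /andP[h1 h2] := lt_on HAB.
  have h3 : ~~ on C (lt A B).
    apply: contraNN HA => h3; by rewrite -(uniq2 HBC h2 h3 HB HC).
  have -> : 2 = size [:: Ls 1; lt A B] by [].
  apply: uniq_leq_size.
    rewrite /= inE andbT; apply: contraNneq HA => ->; exact: h1.
  move=> L; rewrite !inE => /orP[]/eqP E; subst L; rewrite flinesP //.
    by rewrite (npts_Ls H).
  by rewrite EX /npts /= h1 h2 (negbTE h3).
have hs' : 1 < s by lia.
set X' := Xof s Xs; set ls := flines s.+1 _; set ls' := flines s X'.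
have H' := cfgS H.
have uX' : uniq X' := uniq_Xof H'.
have hN : 2 * size X' = s * s.+1 := size_Xof H'.
have uls' : uniq ls' := flines_uniq _ _.
have hf' : forall L, L \in ls' -> npts X' L = s by move=> L; rewrite flinesP // => /eqP.
have hcnt := mem_flines_cnt hs' H.
have hsz' : size ls < s.+1 := hsz.
have hbnd := bound hs' H'.
suff [Xs' [Ls' [Hc HX Hoff]]] : exists Xs' Ls', [/\ cfg s Xs' Ls', Xof s Xs' =i X' &
    forall P, P \in Xs' 0 -> forall L, L \in ls -> L != Ls s -> ~~ on P L].
  have [Hc2 HX2] := extend H Hc HX.
  exists (extXs s Xs' Xs), (extLs s Ls' Ls); split => // P; rewrite /extXs.
  have -> : 0 < s by lia.
  move=> HP L HL; case: (eqVneq L (Ls s)) => [->|HLs]; last exact: Hoff.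
  apply: (Xof_off H); rewrite -HX; apply/mem_XofP; exists 0 => //; lia.
have hnot : forall L, L \in ls' -> L \notin ls -> forall P, ~~ on P L -> forall L', L' \in ls -> L' != Ls s -> on P L' -> L' != L.
  by move=> L _ hL P hP L' _ _ hP'; apply: contraNneq hP => <-.
have hsub : forall L, L \in ls -> L != Ls s -> L \in ls'.
  by move=> L hL hL'; case: (flines_sub hs' H hL hL').
case: (ltngtP (size ls') s) => [hlt|hgt|heq].
- have [Xs' [Ls' [Hc HX Hoff]]] := IH hs' Xs Ls H' hlt.
  exists Xs', Ls'; split => // P HP L HL HLs; apply: Hoff => //; exact: hsub.
- have heq : size ls' = s.+1 by apply/eqP; rewrite eqn_leq hgt hbnd.
  have h2 : 1 < count (predC (mem ls)) ls'.
    have hc : count (mem ls) ls' <= (size ls).-1 := hcnt.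
    have := count_predC (mem ls) ls'; move: hc hsz'; rewrite heq; lia.
  have [a [b [ha hb /negP na /negP nb hab]]] := count_ge2 uls' h2.
  set ms := a :: b :: rem b (rem a ls').
  have ums : uniq ms.
    have u1 : uniq (rem b (rem a ls')) by do 2 apply: rem_uniq.
    have nb' : b \notin rem b (rem a ls') by rewrite (mem_rem_uniq _ (rem_uniq _ uls')) inE eqxx.
    have na' : a \notin rem b (rem a ls').
      by rewrite (mem_rem_uniq _ (rem_uniq _ uls')) inE (mem_rem_uniqF _ uls') andbF.
    by rewrite /ms !cons_uniq in_cons negb_or hab na' nb' u1.
  have hms : forall L, L \in ms -> L \in ls'.
    by move=> L; rewrite !inE => /or3P[/eqP->|/eqP->|/mem_rem/mem_rem].
  have hfm : forall L, L \in ms -> npts X' L = s by move=> L /hms /hf'.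
  have hsm : size ms = s.+1.
    have hb' : b \in rem a ls' by rewrite (mem_rem_uniq _ uls') inE hb eq_sym hab.
    rewrite /ms /= (size_rem hb') (size_rem ha) heq; lia.
  have hr : size ms = s \/ size ms = s.+1 by right.
  exists (Xs1 X' ms), (Ls1 ms); split.
  + exact: cfg1.
  + move=> P; apply/mem_XofP/idP => [[i hi HP]|HP]; first by apply/(mem1 uX' ums hfm hN hr hsm); exists i.
    by have [i hi HP'] := (mem1 uX' ums hfm hN hr hsm P).1 HP; exists i.
  + move=> P; rewrite Xs1_0 inE => /eqP -> L HL HLs; apply/negP => hQ.
    have hL' := hsub L HL HLs.
    have hLm : L \in ms by apply: mem_rem2.
    case: (Q10_lines uX' ums hfm hN hr hsm (ltnW hs') hLm hQ); rewrite /M /= => E.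
      by apply: na; rewrite -E.
    by apply: nb; rewrite -E.
- have h1 : 0 < count (predC (mem ls)) ls'.
    have hc : count (mem ls) ls' <= (size ls).-1 := hcnt.
    have := count_predC (mem ls) ls'; move: hc hsz'; rewrite heq; lia.
  have [a ha /negP na] := count_ge1 h1.
  set ms := a :: rem a ls'.
  have ums : uniq ms by rewrite /ms /= mem_rem_uniq ?rem_uniq // inE eqxx.
  have hms : forall L, L \in ms -> L \in ls'.
    by move=> L; rewrite !inE => /orP[/eqP->|/mem_rem].
  have hfm : forall L, L \in ms -> npts X' L = s by move=> L /hms /hf'.
  have hsm : size ms = s by rewrite /= size_rem // heq; lia.
  have hr : size ms = s \/ size ms = s.+1 by left.
  exists (Xs2 X' ms), (M ms); split.
  + exact: cfg2.
  + move=> P; apply/mem_XofP/idP => [[i hi HP]|HP]; first by apply/(mem2 uX' ums hfm hN hr hsm); exists i.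
    by have [i hi HP'] := (mem2 uX' ums hfm hN hr hsm P).1 HP; exists i.
  + move=> P; rewrite /Xs2 /= inE => /eqP -> L HL HLs; apply/negP => hP.
    have hs0 : 0 < s by lia.
    have [_ o1 m1] := Pp_spec uX' ums hfm hN hr hsm hs0.
    have hL' := hsub L HL HLs.
    have hLm : L \in ms by apply: mem_rem1.
    have hLi : index L ms < size ms by rewrite index_mem.
    have hP' : on (Pp X' ms 0) (M ms (index L ms)) by rewrite /M nth_index.
    have := one_line ums m1 (_ : 0 < size ms) hLi o1 hP'.
    rewrite hsm => /(_ hs0) E.
    by apply: na; move: HL; rewrite -(nth_index x0 hLm) E.
Qed.

End Comb.

Section Geom.
Variable k : fieldType.
Local Open Scope ring_scope.

Definition cross (u v : k * k * k) : k * k * k :=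
  let: (u1, u2, u3) := u in let: (v1, v2, v3) := v in
  (u2 * v3 - u3 * v2, u3 * v1 - u1 * v3, u1 * v2 - u2 * v1).

Definition dot (u v : k * k * k) : k :=
  let: (u1, u2, u3) := u in let: (v1, v2, v3) := v in
  u1 * v1 + u2 * v2 + u3 * v3.

Definition z3 : k * k * k := (0, 0, 0).

Lemma key (a1 a2 a3 b1 b2 b3 c1 c2 c3 : k) : c1 != 0 ->
  a2 * c3 = a3 * c2 -> a3 * c1 = a1 * c3 -> a1 * c2 = a2 * c1 ->
  b2 * c3 = b3 * c2 -> b3 * c1 = b1 * c3 -> b1 * c2 = b2 * c1 ->
  [/\ a2 * b3 = a3 * b2, a3 * b1 = a1 * b3 & a1 * b2 = a2 * b1].
Proof.
move=> h _ ea2 ea3 _ eb2 eb3; split.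
- apply: (mulfI (mulf_neq0 h h)).
  have -> : c1 * c1 * (a2 * b3) = (a1 * c2) * (b3 * c1) by rewrite ea3; ring.
  have -> : c1 * c1 * (a3 * b2) = (a3 * c1) * (b1 * c2) by rewrite eb3; ring.
  rewrite eb2 ea2; ring.
- apply: (mulfI h).
  have -> : c1 * (a3 * b1) = (a3 * c1) * b1 by ring.
  have -> : c1 * (a1 * b3) = a1 * (b3 * c1) by ring.
  rewrite ea2 eb2; ring.
- apply: (mulfI h).
  have -> : c1 * (a1 * b2) = a1 * (b1 * c2) by rewrite eb3; ring.
  have -> : c1 * (a2 * b1) = (a1 * c2) * b1 by rewrite ea3; ring.
  ring.
Qed.

Lemma cross0P (a c : k * k * k) : cross a c = z3 ->
  let: (a1, a2, a3) := a in let: (c1, c2, c3) := c in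
  [/\ a2 * c3 = a3 * c2, a3 * c1 = a1 * c3 & a1 * c2 = a2 * c1].
Proof.
case: a => [[a1 a2] a3]; case: c => [[c1 c2] c3] /= [e1 e2 e3].
by split; apply/eqP; rewrite -subr_eq0; apply/eqP.
Qed.

Lemma cross_trans (a b c : k * k * k) : c != z3 -> cross a c = z3 -> cross b c = z3 ->
  cross a b = z3.
Proof.
case: a => [[a1 a2] a3]; case: b => [[b1 b2] b3]; case: c => [[c1 c2] c3] hc.
move=> /cross0P [ea1 ea2 ea3] /cross0P [eb1 eb2 eb3].
have fin : [/\ a2 * b3 = a3 * b2, a3 * b1 = a1 * b3 & a1 * b2 = a2 * b1] ->
   cross (a1, a2, a3) (b1, b2, b3) = z3.
  by case=> f1 f2 f3; rewrite /cross /z3 f1 f2 f3 !subrr.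
apply: fin.
case: (eqVneq c1 0) => [h1|h1]; first last.
  exact: (key h1 ea1 ea2 ea3 eb1 eb2 eb3).
case: (eqVneq c2 0) => [h2|h2]; first last.
  have [f1 f2 f3] := key h2 ea2 ea3 ea1 eb2 eb3 eb1; by split.
case: (eqVneq c3 0) => [h3|h3]; first last.
  have [f1 f2 f3] := key h3 ea3 ea1 ea2 eb3 eb1 eb2; by split.
by move: hc; rewrite h1 h2 h3 eqxx.
Qed.

Lemma cross_perp (a p q : k * k * k) : dot a p = 0 -> dot a q = 0 -> cross a (cross p q) = z3.
Proof.
case: a => [[a1 a2] a3]; case: p => [[p1 p2] p3]; case: q => [[q1 q2] q3] /= hp hq.
rewrite /z3; congr (_, _, _).
- have -> : a2 * (p1 * q2 - p2 * q1) - a3 * (p3 * q1 - p1 * q3) =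
     p1 * (a1 * q1 + a2 * q2 + a3 * q3) - q1 * (a1 * p1 + a2 * p2 + a3 * p3) by ring.
  by rewrite hp hq !mulr0 subrr.
- have -> : a3 * (p2 * q3 - p3 * q2) - a1 * (p1 * q2 - p2 * q1) =
     p2 * (a1 * q1 + a2 * q2 + a3 * q3) - q2 * (a1 * p1 + a2 * p2 + a3 * p3) by ring.
  by rewrite hp hq !mulr0 subrr.
- have -> : a1 * (p3 * q1 - p1 * q3) - a2 * (p2 * q3 - p3 * q2) =
     p3 * (a1 * q1 + a2 * q2 + a3 * q3) - q3 * (a1 * p1 + a2 * p2 + a3 * p3) by ring.
  by rewrite hp hq !mulr0 subrr.
Qed.

Lemma cross0_eq (u v : k * k * k) : pnormal u -> pnormal v -> cross u v = z3 -> u = v.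
Proof.
case: u => [[u1 u2] u3]; case: v => [[v1 v2] v3] /= hu hv [e1 e2 e3].
case/orP: hu => [/orP[/eqP h1|/andP[/eqP h1 /eqP h2]]|/and3P[/eqP h1 /eqP h2 /eqP h3]];
case/orP: hv => [/orP[/eqP g1|/andP[/eqP g1 /eqP g2]]|/and3P[/eqP g1 /eqP g2 /eqP g3]];
subst; rewrite ?mul0r ?mul1r ?mulr0 ?mulr1 ?subr0 ?sub0r in e1 e2 e3.
all: try (by move/eqP: e1; rewrite ?oppr_eq0 oner_eq0).
all: try (by move/eqP: e2; rewrite ?oppr_eq0 oner_eq0).
all: try (by move/eqP: e3; rewrite ?oppr_eq0 oner_eq0).
all: try (move/eqP: e1; rewrite subr_eq0 => /eqP e1).
all: try (move/eqP: e2; rewrite subr_eq0 => /eqP e2).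
all: try (move/eqP: e3; rewrite subr_eq0 => /eqP e3).
all: by subst.
Qed.

End Geom.

Section Geom2.
Variable k : fieldType.
Local Open Scope ring_scope.

Lemma on_lineE (P L : pvec k) : on_line P L = (dot (val L) (val P) == 0).
Proof. by case: P => [[[x y] z] hP]; case: L => [[[a b] c] hL]. Qed.

Lemma cross_ne0 (P Q : pvec k) : P != Q -> cross (val P) (val Q) != z3 k.
Proof.
move=> hPQ; apply: contra hPQ => /eqP /(cross0_eq (valP P) (valP Q)) E; apply/eqP.
exact: val_inj.
Qed.

Lemma uniq2_k (P Q L M : pvec k) : P != Q -> on_line P L -> on_line Q L ->
  on_line P M -> on_line Q M -> L = M.
Proof.
move=> hPQ; rewrite !on_lineE => /eqP h1 /eqP h2 /eqP h3 /eqP h4.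
apply: val_inj; apply: cross0_eq (valP L) (valP M) _.
exact: cross_trans (cross_ne0 hPQ) (cross_perp h1 h2) (cross_perp h3 h4).
Qed.

Definition normv (v : k * k * k) : k * k * k :=
  let: (x, y, z) := v in
  if x != 0 then (1, y / x, z / x) else if y != 0 then (0, 1, z / y) else (0, 0, 1).

Lemma normv_normal v : pnormal (normv v).
Proof.
case: v => [[x y] z] /=; case: ifP => _; [|case: ifP => _];
  by rewrite /pnormal !eqxx /= ?orbT ?andbT.
Qed.

Lemma dot_normv v p : v != z3 k -> dot v p = 0 -> dot (normv v) p = 0.
Proof.
case: v => [[x y] z]; case: p => [[p1 p2] p3] /= hv hd.
case: (eqVneq x 0) => [hx|hx] /=.
  case: (eqVneq y 0) => [hy|hy] /=.
    subst x y; have hz : z != 0 by apply: contra hv => /eqP ->.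
    move: hd; rewrite ?mul0r ?add0r => /eqP; rewrite mulf_eq0 (negbTE hz) /= => /eqP ->.
    by rewrite ?mul0r ?mulr0 ?addr0 ?add0r.
  have -> : 0 * p1 + 1 * p2 + z / y * p3 = (x * p1 + y * p2 + z * p3) / y by rewrite hx; field.
  by rewrite hd mul0r.
have -> : 1 * p1 + y / x * p2 + z / x * p3 = (x * p1 + y * p2 + z * p3) / x by field.
by rewrite hd mul0r.
Qed.

Definition mkp (v : k * k * k) : pvec k := @exist _ _ (normv v) (normv_normal v).
Definition ltk (P Q : pvec k) : pvec k := mkp (cross (val P) (val Q)).

Lemma lt_on_k (P Q : pvec k) : P != Q -> on_line P (ltk P Q) && on_line Q (ltk P Q).
Proof.
move=> hPQ; have hc := cross_ne0 hPQ.
rewrite !on_lineE /=; apply/andP; split; apply/eqP; apply: dot_normv => //.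
  by case: (val P) => [[p1 p2] p3]; case: (val Q) => [[q1 q2] q3] /=; ring.
by case: (val P) => [[p1 p2] p3]; case: (val Q) => [[q1 q2] q3] /=; ring.
Qed.

Lemma pt0_normal : pnormal ((1 : k), (0 : k), (0 : k)).
Proof. by rewrite /pnormal eqxx. Qed.

Definition pt0 : pvec k := @exist _ (fun v => pnormal v) _ pt0_normal.

End Geom2.

Definition natf (s : nat) (A : Type) (d : A) (f : 'I_s -> A) (i : nat) : A :=
  if (insub i : option 'I_s) is Some o then f o else d.

Lemma natfE s A (d : A) f (o : 'I_s) : natf d f o = f o.
Proof. by rewrite /natf valK. Qed.

Lemma natfE' s A (d : A) f i (hi : i < s) : natf d f i = f (Ordinal hi).
Proof. by rewrite -(natfE d f (Ordinal hi)). Qed.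

Section Conv.
Variable k : fieldType.
Notation T := (pvec k).
Notation on := (@on_line k).

Lemma conv_in s (X : seq T) (Xs0 : 'I_s -> seq T) (Ls0 : 'I_s -> T) : defines_config type1s X Xs0 Ls0 ->
  cfg on s (natf [::] Xs0) (natf (pt0 k) Ls0) /\ X =i Xof s (natf [::] Xs0).
Proof.
case=> Hm Hsz Hon Hinj Hoff; split.
- split.
  + by move=> i hi; rewrite (natfE' [::] Xs0 hi); apply: Hsz.
  + by move=> i P hi; rewrite (natfE' [::] Xs0 hi) (natfE' (pt0 k) Ls0 hi); apply: Hon.
  + by move=> i j hi hj; rewrite (natfE' (pt0 k) Ls0 hi) (natfE' (pt0 k) Ls0 hj) => /Hinj [].
  + move=> i j hji hi P; have hj := ltn_trans hji hi.
    rewrite (natfE' [::] Xs0 hj) (natfE' (pt0 k) Ls0 hi) => HP.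
    exact: (Hoff (Ordinal hi) (Ordinal hj) hji).
- move=> P; apply/idP/mem_XofP => [/Hm [o HP]|[i hi HP]].
    by exists o => //; rewrite natfE.
  by apply/Hm; exists (Ordinal hi); rewrite -(natfE' [::] Xs0 hi).
Qed.

Lemma conv_out s (X : seq T) Xs Ls : cfg on s Xs Ls -> X =i Xof s Xs ->
  defines_config type1s X (fun o : 'I_s => Xs o) (fun o : 'I_s => Ls o).
Proof.
case=> H1 H2 H3 H4 HX; split.
- move=> P; rewrite HX; split => [/mem_XofP [i hi HP]|[o HP]].
    by exists (Ordinal hi).
  by apply/mem_XofP; exists o.
- by move=> o; apply: H1.
- by move=> o P; apply: H2.
- by move=> o o' /H3 E; apply: val_inj; apply: E.
- by move=> o o' hji P; apply: H4.
Qed.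

End Conv.

Section Final.
Variable k : closedFieldType.
Local Open Scope ring_scope.

Lemma main_aux (s : nat) (X : seq (ppoint k)) :
  (2 <= s)%N -> is_kconfig s type1s X ->
  exactly_one3
    (exists ls : seq (pline k),
        lines_with X s ls /\ size ls = s.+1 /\
        (forall P, P \in X <->
           exists L1 L2, [/\ L1 \in ls, L2 \in ls, L1 != L2,
                             on_line P L1 & on_line P L2]))
    (exists ls : seq (pline k),
        lines_with X s ls /\ size ls = s /\
        exists (Xs : 'I_s -> seq (ppoint k)) (Ls : 'I_s -> pline k),
          [/\ defines_config type1s X Xs Ls,
              (forall L, L \in ls <-> exists i, Ls i = L) &
              (forall i, exists Pi : ppoint k,
                 [/\ Pi \in X, on_line Pi (Ls i),
                     (forall j, j != i -> ~~ on_line Pi (Ls j)) &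
                     (forall P, (P \in X /\ on_line P (Ls i)) <->
                        (P = Pi \/ exists j, j != i /\
                            on_line P (Ls i) /\ on_line P (Ls j)))])])
    (exists (r : nat) (ls : seq (pline k)),
        [/\ (1 <= r < s)%N, lines_with X s ls, size ls = r &
        exists (Xs : 'I_s -> seq (ppoint k)) (Ls : 'I_s -> pline k),
          defines_config type1s X Xs Ls /\
          (forall (i : 'I_s), val i = 0%N ->
             forall P, P \in Xs i -> forall L, L \in ls -> ~~ on_line P L)]).
Proof.
have u2 := @uniq2_k k; have lo := @lt_on_k k; set x0 := pt0 k.
move=> hs [uX [_ [Xs0 [Ls0 Hd]]]].
have [H HX] := conv_in Hd.
set Xs := natf [::] Xs0 in H HX; set Ls := natf (pt0 k) Ls0 in H.
have hs' : (1 < s)%N := hs.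
have uXo := uniq_Xof H.
have hperm : perm_eq X (Xof s Xs) := uniq_perm uX uXo HX.
have hN : (2 * size X = s * s.+1)%N by rewrite (perm_size hperm); exact: size_Xof H.
set ls := flines (@on_line k) (@ltk k) s X.
have uls : uniq ls := flines_uniq _ _ _ _.
have memls : forall L, L \in ls <-> npts_on X L = s.
  by move=> L; rewrite (flinesP u2 lo) //; split => /eqP.
have lw : lines_with X s ls by split.
have lwsz : forall ls2, lines_with X s ls2 -> size ls2 = size ls.
  by move=> ls2 [u m]; apply: (lw_size u2 lo).
have hf : forall L, L \in ls -> npts (@on_line k) X L = s by move=> L /memls.
have hfl : ls =i flines (@on_line k) (@ltk k) s (Xof s Xs) := flines_perm u2 lo uX hs' hperm.
have szo : size ls = size (flines (@on_line k) (@ltk k) s (Xof s Xs)).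
  apply: perm_size; apply: uniq_perm => //; exact: flines_uniq.
have hbnd : (size ls <= s.+1)%N.
  rewrite szo. exact: (bound u2 lo hs' H).
have hpos : (0 < size ls)%N.
  have [s' es] : exists s', s = s'.+1 by exists s.-1; lia.
  move: (H) (hperm) (memls); rewrite es => H' hp' ml.
  have e := npts_Ls H'.
  have hm : Ls s' \in ls.
    apply/ml; rewrite -e /npts_on /npts; by move/permP: hp' => ->.
  by move: hm; case: (ls).
case: (ltngtP (size ls) s) => [hlt|hgt|heq].
- have [Xs' [Ls' [Hc HXo Hoff]]] := iii u2 lo x0 hs' H (ltac:(by rewrite -szo)).
  apply: Or33; split; last split.
  + by move=> [ls2 [hl2 [hsz2 _]]]; move: (lwsz _ hl2); lia.
  + by move=> [ls2 [hl2 [hsz2 _]]]; move: (lwsz _ hl2); lia.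
  exists (size ls), ls; split => //; first by rewrite hpos hlt.
  exists (fun o : 'I_s => Xs' o), (fun o : 'I_s => Ls' o); split.
    by apply: conv_out Hc _ => P; rewrite HX HXo.
  move=> i hi P HP L HL; apply: (Hoff P) => //; first by rewrite -hi.
  by rewrite -hfl.
- have heq : size ls = s.+1 by apply/eqP; rewrite eqn_leq hgt hbnd.
  have [H12 meet] := C3 u2 uX uls hf hN (or_intror heq).
  have all2 := C3full u2 uX uls hf hN heq.
  apply: Or31; split; last split.
  + exists ls; split => //; split => // P; split.
      move=> HP; have h := all2 P HP.
      have := @count_ge2 _ ls (@on_line k P) uls; rewrite -/(mm (@on_line k) ls P) h.
      move=> /(_ isT) [L1 [L2 [h1 h2 h3 h4 h5]]]; by exists L1, L2.
    move=> [L1 [L2 [h1 h2 h3 h4 h5]]].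
    have [Q HQ /andP[q1 q2]] := meet L1 L2 h1 h2 h3.
    by rewrite (meet_uniq u2 h3 h4 h5 q1 q2).
  + by move=> [ls2 [hl2 [hsz2 _]]]; move: (lwsz _ hl2); lia.
  + by move=> [r [ls2 [/andP[_ hr] hl2 hsz2 _]]]; move: (lwsz _ hl2); lia.
- have hr : size ls = s \/ size ls = s.+1 by left.
  have [H12 meet] := C3 u2 uX uls hf hN hr.
  have hi : forall i : 'I_s, (i < size ls)%N by move=> i; rewrite heq ltn_ord.
  apply: Or32; split; last split.
  + by move=> [ls2 [hl2 [hsz2 _]]]; move: (lwsz _ hl2); lia.
  + exists ls; split => //; split => //.
    exists (fun o : 'I_s => Xs2 (@on_line k) x0 X ls o), (fun o : 'I_s => M x0 ls o); split.
    * apply: conv_out (cfg2 u2 x0 uX uls hf hN hr heq) _ => P.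
      apply/idP/mem_XofP => [HP|HP]; first exact/(mem2 u2 x0 uX uls hf hN hr heq).
      exact/(mem2 u2 x0 uX uls hf hN hr heq).
    * move=> L; split => [HL|[i <-]]; last by apply: mem_nth; apply: hi.
      have hL : (index L ls < s)%N by rewrite -heq index_mem.
      by exists (Ordinal hL); rewrite /M nth_index.
    * move=> i; have [p1 p2 p3] := Pp_spec u2 x0 uX uls hf hN hr heq (ltn_ord i).
      exists (Pp (@on_line k) x0 X ls i); split => //.
        move=> j hj; apply/negP => hon.
        have E := one_line uls p3 (hi i) (hi j) p2 hon.
        by move/val_inj: E => E; rewrite E eqxx in hj.
      move=> P; split.
        move=> [HP hon]; case: (H12 P HP) => hm.
          by left; exact: (Pp_uniq u2 uX uls hf hN hr heq (ltn_ord i) HP hon hm).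
        have [a [b [ha hb hab h1 h2]]] := two_lines x0 uls HP hm.
        right; case: (only2 u2 uX uls hf hN hr HP ha hb (hi i) hab h1 h2 hon) => E.
          have hb' : (b < s)%N by rewrite -heq.
          exists (Ordinal hb'); split => //.
          by apply/negP => /eqP /(congr1 val) /= Eb; rewrite Eb -E eqxx in hab.
        have ha' : (a < s)%N by rewrite -heq.
        exists (Ordinal ha'); split => //.
        by apply/negP => /eqP /(congr1 val) /= Ea; rewrite Ea E eqxx in hab.
      move=> [->|[j [hj [h1 h2]]]]; first by [].
      have hij : (val i != val j) by apply: contra hj => /eqP /val_inj ->.
      rewrite (Q_uniq u2 uX uls hf hN hr (hi i) (hi j) hij h1 h2).
      have [q1 q2 q3] := Q_spec u2 x0 uX uls hf hN hr (hi i) (hi j) hij.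
      by split.
  + by move=> [r [ls2 [/andP[_ hr2] hl2 hsz2 _]]]; move: (lwsz _ hl2); lia.
Qed.

End Final.

Local Open Scope ring_scope.

Theorem lemma4p1 (k : closedFieldType) (s : nat) (X : seq (ppoint k)) :
  (2 <= s)%N -> is_kconfig s type1s X ->
  exactly_one3
    (* (i) *)
    (exists ls : seq (pline k),
        lines_with X s ls /\ size ls = s.+1 /\
        (forall P, P \in X <->
           exists L1 L2, [/\ L1 \in ls, L2 \in ls, L1 != L2,
                             on_line P L1 & on_line P L2]))
    (* (ii) *)
    (exists ls : seq (pline k),
        lines_with X s ls /\ size ls = s /\
        exists (Xs : 'I_s -> seq (ppoint k)) (Ls : 'I_s -> pline k),
          [/\ defines_config type1s X Xs Ls,
              (forall L, L \in ls <-> exists i, Ls i = L) &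
              (forall i, exists Pi : ppoint k,
                 [/\ Pi \in X, on_line Pi (Ls i),
                     (forall j, j != i -> ~~ on_line Pi (Ls j)) &
                     (forall P, (P \in X /\ on_line P (Ls i)) <->
                        (P = Pi \/ exists j, j != i /\
                            on_line P (Ls i) /\ on_line P (Ls j)))])])
    (* (iii) *)
    (exists (r : nat) (ls : seq (pline k)),
        [/\ (1 <= r < s)%N, lines_with X s ls, size ls = r &
        exists (Xs : 'I_s -> seq (ppoint k)) (Ls : 'I_s -> pline k),
          defines_config type1s X Xs Ls /\
          (forall (i : 'I_s), val i = 0%N ->
             forall P, P \in Xs i -> forall L, L \in ls -> ~~ on_line P L)]).
Proof. exact: main_aux. Qed.
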